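(* Let $\mathsf{CS}$ be a constant specification for $\mathsf{LPC}^{int}$. For every set of formulas $T$ and formula $\phi$: if $T\models_{\mathsf{LPC}^{int}_{\mathsf{CS}}}\phi$, then $T\vdash_{\mathsf{LPC}^{int}_{\mathsf{CS}}}\phi$.
   Context: Language of $\mathsf{LPC}^{int}$: countable sets $\mathsf{Const}$, $\mathsf{Var}$, $\mathsf{Prop}$; terms and formulas defined by mutual recursion: $t ::= c \mid x \mid t\cdot t \mid t+t \mid\ !t \mid \langle t,\phi\rangle$ and $\phi ::= p \mid \neg\phi \mid \phi\wedge\phi \mid \phi\supset\phi \mid \phi>\phi \mid t{:}\phi$; $\mathsf{Tm},\mathsf{Fm}$ the sets of terms and formulas. Axiom schemes: (A1) all instances of classical tautologies; (A2) $(\phi>(\psi\supset\chi))\supset((\phi>\psi)\supset(\phi>\chi))$; (A3) $\phi>\phi$; (A4) $(\phi>\psi)\supset(\phi\supset\psi)$; (A5) $(s{:}(\phi>\psi)\wedge t{:}\phi) > (s\cdot t){:}\psi$; (A6) $s{:}\phi > (s+t){:}\phi$; (A7) $t{:}\phi>(s+t){:}\phi$; (A8) $t{:}\phi>\phi$; (A9) $t{:}\phi > (!t){:}t{:}\phi$; (A10) $t{:}\psi\supset\langle t,\phi\rangle{:}(\phi>\psi)$. A constant specification $\mathsf{CS}$ is a set of $c{:}\phi$ with $c\in\mathsf{Const}$, $\phi$ an instance of (A1)–(A10). $\mathsf{LPC}^{int}_{\mathsf{CS}}$: axioms (A1)–(A10) and $\mathsf{CS}$; rules (MP) from $\phi,\phi\supset\psi$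 infer $\psi$, and (RCN) from $\psi$ infer $\phi>\psi$. $T\vdash\phi$ iff $\vdash(\psi_1\wedge\cdots\wedge\psi_n)\supset\phi$ for some $\psi_1,\dots,\psi_n\in T$, $n\ge0$. Relational models $\mathcal M=(W,W_N,R_{Fm},R_{Tm},V)$: $W$ nonempty, $W_N\subseteq W$ nonempty (normal states); $R_\phi\subseteq W_N\times W_N$ for each formula; $R_t\subseteq W\times W$ for each term; $V(w)\subseteq\mathsf{Prop}$ for $w\in W_N$, $V(w)\subseteq\mathsf{Fm}$ for $w\in W\setminus W_N$. Truth: at non-normal $w$, $w\models\phi$ iff $\phi\in V(w)$; at normal $w$: $p$ iff $p\in V(w)$, $\neg,\wedge,\supset$ classical, $\phi>\psi$ iff $R_\phi(w)\subseteq[\psi]$, $t{:}\phi$ iff $R_t(w)\subseteq[\phi]$, with $[\phi]=\{w\in W:w\models\phi\}$. An $\mathsf{LPC}^{int}_{\mathsf{CS}}$-model is a relational model such that for all $w\in W_N$: (1) $R_\phi(w)\subseteq[\phi]$; (2) if $w\in[\phi]$ then $w\in R_\phi(w)$; (3) $R_c(w)\subseteq[\phi]$ for each $c{:}\phi\in\mathsf{CS}$; (4) $R_{s+t}(w)\subseteq R_s(w)\cap R_t(w)$; (5) for all $v\in R_{s\cdot t}(w)$, all $\phi,\psi$: if $w\in[s{:}(\phi>\psi)\wedge t{:}\phi]$ then $v\in[\psi]$; (6) $wR_tw$; (7) for $v,u\in W$, if $wR_{!t}v$ and $vR_tu$ then $wR_tu$; (8) for all $v\in W$, $\phi,\psi$,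 $t$: if $w\in[t{:}\psi]$ and $wR_{\langle t,\phi\rangle}v$ then $v\in[\phi>\psi]$. $T\models_{\mathsf{LPC}^{int}_{\mathsf{CS}}}\phi$ iff for every such model and every $w\in W_N$ at which all members of $T$ are true, $\phi$ is true at $w$. *)

(* Defs.v *)
From Stdlib Require Import List.
Import ListNotations.

(* Const, Var, Prop are countable: we take each to be nat. *)
Definition const := nat.
Definition var := nat.
Definition pvar := nat.

Inductive tm : Type :=
| TConst : const -> tm
| TVar : var -> tm
| TApp : tm -> tm -> tm
| TSum : tm -> tm -> tm
| TBang : tm -> tm
| TPair : tm -> fm -> tm
with fm : Type :=
| FAtom : pvar -> fm
| FNeg : fm -> fm
| FAnd : fm -> fm -> fm
| FImp : fm -> fm -> fm
| FCond : fm -> fm -> fm         (* phi > psi *)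
| FJust : tm -> fm -> fm.

(* Classical tautologies: formulas true under every boolean assignment to
   the propositionally atomic formulas (p, phi > psi, t : phi). *)
Fixpoint beval (v : fm -> bool) (f : fm) : bool :=
  match f with
  | FAtom _ => v f
  | FNeg a => negb (beval v a)
  | FAnd a b => andb (beval v a) (beval v b)
  | FImp a b => orb (negb (beval v a)) (beval v b)
  | FCond _ _ => v f
  | FJust _ _ => v f
  end.

Definition tautology (f : fm) : Prop := forall v, beval v f = true.

Inductive axiom : fm -> Prop :=
| A1 : forall f, tautology f -> axiom f
| A2 : forall a b c, axiom (FImp (FCond a (FImp b c)) (FImp (FCond a b) (FCond a c)))
| A3 : forall a, axiom (FCond a a)
| A4 : forall a b, axiom (FImp (FCond a b) (FImp a b))
| A5 : forall s t a b,
    axiom (FCond (FAnd (FJust s (FCond a b)) (FJust t a)) (FJust (TApp s t) b))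
| A6 : forall s t a, axiom (FCond (FJust s a) (FJust (TSum s t) a))
| A7 : forall s t a, axiom (FCond (FJust t a) (FJust (TSum s t) a))
| A8 : forall t a, axiom (FCond (FJust t a) a)
| A9 : forall t a, axiom (FCond (FJust t a) (FJust (TBang t) (FJust t a)))
| A10 : forall t a b, axiom (FImp (FJust t b) (FJust (TPair t a) (FCond a b))).

Definition constant_spec (CS : const -> fm -> Prop) : Prop :=
  forall c f, CS c f -> axiom f.

Inductive prov (CS : const -> fm -> Prop) : fm -> Prop :=
| PAx : forall f, axiom f -> prov CS f
| PCS : forall c f, CS c f -> prov CS (FJust (TConst c) f)
| PMP : forall f g, prov CS f -> prov CS (FImp f g) -> prov CS g
| PRCN : forall f g, prov CS g -> prov CS (FCond f g).

Fixpoint bigconj (f : fm) (l : list fm) : fm :=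
  match l with
  | [] => f
  | g :: l' => FAnd f (bigconj g l')
  end.

Definition deriv (CS : const -> fm -> Prop) (T : fm -> Prop) (f : fm) : Prop :=
  prov CS f \/
  exists g l, T g /\ (forall h, In h l -> T h) /\ prov CS (FImp (bigconj g l) f).

(* Relational models. V is split in two parts: Vp (for normal states, a set of
   propositional variables) and Vf (for non-normal states, a set of formulas). *)
Record model : Type := {
  W : Type;
  WN : W -> Prop;
  RF : fm -> W -> W -> Prop;
  RT : tm -> W -> W -> Prop;
  Vp : W -> pvar -> Prop;
  Vf : W -> fm -> Prop
}.

Fixpoint sat (M : model) (w : W M) (f : fm) : Prop :=
  (WN M w /\
    match f with
    | FAtom p => Vp M w p
    | FNeg a => ~ sat M w a
    | FAnd a b => sat M w a /\ sat M w b
    | FImp a b => sat M w a -> sat M w b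
    | FCond a b => forall v, RF M a w v -> sat M v b
    | FJust t a => forall v, RT M t w v -> sat M v a
    end)
  \/ (~ WN M w /\ Vf M w f).

Definition LPC_model (CS : const -> fm -> Prop) (M : model) : Prop :=
  (exists w : W M, WN M w) /\
  (forall f w v, RF M f w v -> WN M w /\ WN M v) /\
  (forall w, WN M w ->
    (forall f v, RF M f w v -> sat M v f) /\
    (forall f, sat M w f -> RF M f w w) /\
    (forall c f, CS c f -> forall v, RT M (TConst c) w v -> sat M v f) /\
    (forall s t v, RT M (TSum s t) w v -> RT M s w v /\ RT M t w v) /\
    (forall s t v, RT M (TApp s t) w v -> forall a b,
        sat M w (FAnd (FJust s (FCond a b)) (FJust t a)) -> sat M v b) /\
    (forall t, RT M t w w) /\
    (forall t v u, RT M (TBang t) w v -> RT M t v u -> RT M t w u) /\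
    (forall v a b t, sat M w (FJust t b) -> RT M (TPair t a) w v ->
        sat M v (FCond a b))).

Definition entails (CS : const -> fm -> Prop) (T : fm -> Prop) (f : fm) : Prop :=
  forall M : model, LPC_model CS M ->
    forall w : W M, WN M w -> (forall g, T g -> sat M w g) -> sat M w f.

(* Main.v *)
Require Import Defs.
From Stdlib Require Import List Bool Arith Cantor Classical ClassicalEpsilon Lia.
Import ListNotations.

Definition P2 (a b : nat) : nat := Cantor.to_nat (a, b).
Lemma P2_inj a b c d : P2 a b = P2 c d -> a = c /\ b = d.
Proof.
  unfold P2; intro H. apply (f_equal Cantor.of_nat) in H.
  rewrite !Cantor.cancel_of_to in H. inversion H; auto.
Qed.

Fixpoint ctm (t : tm) : nat :=
  match t with
  | TConst c => P2 0 c
  | TVar x => P2 1 x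
  | TApp a b => P2 2 (P2 (ctm a) (ctm b))
  | TSum a b => P2 3 (P2 (ctm a) (ctm b))
  | TBang a => P2 4 (ctm a)
  | TPair a f => P2 5 (P2 (ctm a) (cfm f))
  end
with cfm (f : fm) : nat :=
  match f with
  | FAtom p => P2 0 p
  | FNeg a => P2 1 (cfm a)
  | FAnd a b => P2 2 (P2 (cfm a) (cfm b))
  | FImp a b => P2 3 (P2 (cfm a) (cfm b))
  | FCond a b => P2 4 (P2 (cfm a) (cfm b))
  | FJust t a => P2 5 (P2 (ctm t) (cfm a))
  end.

Scheme tm_mut := Induction for tm Sort Prop
with fm_mut := Induction for fm Sort Prop.

Ltac splitP :=
  repeat match goal with
  | H : P2 _ _ = P2 _ _ |- _ => apply P2_inj in H; destruct H
  end.

Lemma code_inj : forall f f', cfm f = cfm f' -> f = f'.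
Proof.
  apply (fm_mut (fun t => forall t', ctm t = ctm t' -> t = t')
                (fun f => forall f', cfm f = cfm f' -> f = f'));
  intros; match goal with |- _ = ?x => destruct x end; simpl in *; splitP; try discriminate;
  repeat match goal with H : forall _, ?c _ = _ -> _ = _ , H' : ?c _ = _ |- _ =>
    apply H in H'; subst end; subst; auto.
Qed.

Definition bot : fm := FAnd (FAtom 0) (FNeg (FAtom 0)).

Lemma beval_bot v : beval v bot = false.
Proof. simpl; destruct (v (FAtom 0)); auto. Qed.

Lemma beval_imps_1 v a b : beval v (FImp a b) = orb (negb (beval v a)) (beval v b).
Proof. reflexivity. Qed.

Definition enum (n : nat) : fm :=
  match excluded_middle_informative (exists f, cfm f = n) with
  | left H => proj1_sig (constructive_indefinite_description _ H)
  | right _ => bot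
  end.

Lemma enum_code f : enum (cfm f) = f.
Proof.
  unfold enum. destruct excluded_middle_informative as [H|H].
  - destruct (constructive_indefinite_description _ H) as [x Hx]; simpl.
    apply code_inj; auto.
  - exfalso; apply H; eauto.
Qed.

Fixpoint imps (l : list fm) (f : fm) : fm :=
  match l with [] => f | h :: r => FImp h (imps r f) end.

Lemma beval_imps v l f :
  beval v (imps l f) = orb (negb (forallb (beval v) l)) (beval v f).
Proof.
  induction l; simpl; auto. rewrite IHl.
  destruct (beval v a), (forallb (beval v) l), (beval v f); reflexivity.
Qed.

Lemma imps_mp CS ps c : prov CS (imps ps c) -> (forall p, In p ps -> prov CS p) -> prov CS c.
Proof.
  induction ps; simpl; intros H Hp; auto.
  apply IHps; auto. eapply PMP; [|exact H]. auto.
Qed.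

Lemma taut_mp CS ps c :
  (forall v, (forall p, In p ps -> beval v p = true) -> beval v c = true) ->
  (forall p, In p ps -> prov CS p) -> prov CS c.
Proof.
  intros Hs Hp. apply (imps_mp CS ps); auto.
  apply PAx, A1. intro v. rewrite beval_imps.
  destruct (forallb (beval v) ps) eqn:E; simpl; auto.
  apply Hs. apply forallb_forall; auto.
Qed.

Definition dv CS (D : fm -> Prop) f :=
  exists l, (forall h, In h l -> D h) /\ prov CS (imps l f).

Lemma dv_weak CS l1 l2 p : (forall h, In h l1 -> In h l2) ->
  prov CS (imps l1 p) -> prov CS (imps l2 p).
Proof.
  intros Hs H. apply (taut_mp CS [imps l1 p]); [|simpl; intros ? [<-|[]]; auto].
  intros v Hv. specialize (Hv _ (or_introl eq_refl)).
  rewrite beval_imps in *. destruct (forallb (beval v) l2) eqn:E; simpl; auto.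
  destruct (forallb (beval v) l1) eqn:E1; simpl in Hv; auto.
  rewrite forallb_forall in E. assert (forallb (beval v) l1 = true); [|congruence].
  apply forallb_forall; auto.
Qed.

Lemma dv_common CS D ps : (forall p, In p ps -> dv CS D p) ->
  exists l, (forall h, In h l -> D h) /\ forall p, In p ps -> prov CS (imps l p).
Proof.
  induction ps; intros H.
  - exists []. simpl; split; tauto.
  - destruct IHps as [l [Hl Hp]]; [intros; apply H; simpl; auto|].
    destruct (H a (or_introl eq_refl)) as [l1 [Hl1 Ha]].
    exists (l1 ++ l). split.
    + intros h Hh; apply in_app_or in Hh; destruct Hh; auto.
    + intros p [<-|Hin].
      * eapply dv_weak; [|exact Ha]. intros; apply in_or_app; auto.
      * eapply dv_weak; [|exact (Hp p Hin)]. intros; apply in_or_app; auto.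
Qed.

Lemma dv_taut CS D ps c :
  (forall v, (forall p, In p ps -> beval v p = true) -> beval v c = true) ->
  (forall p, In p ps -> dv CS D p) -> dv CS D c.
Proof.
  intros Hs Hp. destruct (dv_common CS D ps Hp) as [l [Hl Hps]].
  exists l. split; auto.
  apply (taut_mp CS (map (imps l) ps)).
  - intros v Hv. rewrite beval_imps.
    destruct (forallb (beval v) l) eqn:E; simpl; auto.
    apply Hs. intros p Hin. specialize (Hv _ (in_map (imps l) _ _ Hin)).
    rewrite beval_imps, E in Hv. exact Hv.
  - intros p Hin. apply in_map_iff in Hin. destruct Hin as [q [<- Hq]]. auto.
Qed.

Lemma dv_prov CS D f : prov CS f -> dv CS D f.
Proof. intros; exists []; simpl; split; tauto. Qed.

Lemma dv_in CS (D : fm -> Prop) f : D f -> dv CS D f.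
Proof.
  intros; exists [f]; simpl; split; [intros h [<-|[]]; auto|].
  apply PAx, A1; intro v; simpl; destruct (beval v f); auto.
Qed.

Lemma dv_mono CS (D D' : fm -> Prop) f : (forall g, D g -> D' g) -> dv CS D f -> dv CS D' f.
Proof. intros H [l [Hl Hp]]; exists l; auto. Qed.

Lemma dv1 CS D a c : (forall v, beval v a = true -> beval v c = true) ->
  dv CS D a -> dv CS D c.
Proof.
  intros Hs Ha. apply (dv_taut CS D [a]).
  - intros v Hv; apply Hs, Hv; simpl; auto.
  - intros p [<-|[]]; auto.
Qed.

Lemma dv2 CS D a b c : (forall v, beval v a = true -> beval v b = true -> beval v c = true) ->
  dv CS D a -> dv CS D b -> dv CS D c.
Proof.
  intros Hs Ha Hb. apply (dv_taut CS D [a; b]).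
  - intros v Hv; apply Hs; apply Hv; simpl; auto.
  - intros p [<-|[<-|[]]]; auto.
Qed.

Lemma deduction CS (D : fm -> Prop) e f :
  dv CS (fun g => D g \/ g = e) f -> dv CS D (FImp e f).
Proof.
  intros [l [Hl Hp]].
  set (l' := filter (fun h => if excluded_middle_informative (D h) then true else false) l).
  exists l'. split.
  - intros h Hh. apply filter_In in Hh. destruct Hh as [_ Hh].
    destruct excluded_middle_informative; auto; discriminate.
  - apply (taut_mp CS [imps l f]); [|intros p [<-|[]]; auto].
    intros v Hv. specialize (Hv _ (or_introl eq_refl)). rewrite beval_imps in *.
    destruct (forallb (beval v) l') eqn:E1; simpl; auto.
    destruct (beval v e) eqn:Ee; simpl; auto.
    destruct (forallb (beval v) l) eqn:E2; simpl in Hv; auto.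
    exfalso. assert (forallb (beval v) l = true); [|congruence].
    apply forallb_forall. intros x Hx. rewrite forallb_forall in E1.
    destruct (Hl x Hx) as [Hd| ->]; auto.
    apply E1. apply filter_In. split; auto.
    destruct excluded_middle_informative; tauto.
Qed.

Definition consis CS D := ~ dv CS D bot.
Definition mcs CS D := consis CS D /\ forall f, D f \/ D (FNeg f).


Lemma mcs_dv CS G f : mcs CS G -> dv CS G f -> G f.
Proof.
  intros [Hc Hm] Hd. destruct (Hm f) as [H|H]; auto.
  exfalso; apply Hc. apply (dv2 CS G f (FNeg f)); auto.
  - intros v; simpl; intros -> ; discriminate.
  - apply dv_in; auto.
Qed.

Lemma mcs_prov CS G f : mcs CS G -> prov CS f -> G f.
Proof. intros; apply (mcs_dv CS); auto; apply dv_prov; auto. Qed.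

Lemma mcs_neg CS G a : mcs CS G -> (G (FNeg a) <-> ~ G a).
Proof.
  intros HG. split.
  - intros H1 H2. apply (proj1 HG). apply (dv2 CS G a (FNeg a)); try apply dv_in; auto.
    intros v; simpl; intros ->; discriminate.
  - intros H; destruct (proj2 HG a); tauto.
Qed.

Lemma mcs_and CS G a b : mcs CS G -> (G (FAnd a b) <-> G a /\ G b).
Proof.
  intros HG. split.
  - intros H; split; apply (mcs_dv CS G); auto; apply (dv1 CS G (FAnd a b)); try apply dv_in; auto;
    intros v; simpl; destruct (beval v a), (beval v b); auto.
  - intros [Ha Hb]; apply (mcs_dv CS G); auto; apply (dv2 CS G a b); try apply dv_in; auto;
    intros v; simpl; intros -> ->; auto.
Qed.

Lemma mcs_imp CS G a b : mcs CS G -> (G (FImp a b) <-> (G a -> G b)).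
Proof.
  intros HG. split.
  - intros H Ha; apply (mcs_dv CS G); auto; apply (dv2 CS G a (FImp a b)); try apply dv_in; auto;
    intros v; simpl; intros ->; auto.
  - intros H. destruct (proj2 HG a) as [Ha|Ha].
    + apply (mcs_dv CS G); auto; apply (dv1 CS G b); [|apply dv_in; auto].
      intros v; simpl; destruct (beval v a), (beval v b); simpl; auto.
    + apply (mcs_dv CS G); auto; apply (dv1 CS G (FNeg a)); [|apply dv_in; auto].
      intros v; simpl; destruct (beval v a), (beval v b); simpl; auto.
Qed.

Lemma mcs_mp CS G a b : mcs CS G -> G (FImp a b) -> G a -> G b.
Proof. intros HG H; apply (mcs_imp CS G a b HG); auto. Qed.

Lemma mcs_cond CS G a b : mcs CS G -> G (FCond a b) -> G a -> G b.
Proof.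
  intros HG H Ha. apply (mcs_mp CS G a); auto.
  apply (mcs_mp CS G (FCond a b)); auto. apply (mcs_prov CS); auto. apply PAx, A4.
Qed.

Fixpoint chain CS (D : fm -> Prop) (n : nat) : fm -> Prop :=
  match n with
  | 0 => D
  | S n => let C := chain CS D n in
      if excluded_middle_informative (consis CS (fun g => C g \/ g = enum n))
      then (fun g => C g \/ g = enum n)
      else (fun g => C g \/ g = FNeg (enum n))
  end.

Lemma chain_cons CS D n : consis CS D -> consis CS (chain CS D n).
Proof.
  intros HD. induction n; simpl; auto.
  destruct excluded_middle_informative as [H|H]; auto.
  intro Hb. apply IHn. apply deduction in Hb.
  apply NNPP in H. apply deduction in H.
  refine (dv2 CS _ _ _ _ _ H Hb). intros v; rewrite !beval_imps_1, !beval_bot. cbn [beval].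
  destruct (beval v (enum n)); simpl; auto.
Qed.

Lemma chain_mono CS D n m g : n <= m -> chain CS D n g -> chain CS D m g.
Proof.
  induction 1; auto. intro H0. simpl. destruct excluded_middle_informative; auto.
Qed.

Definition lind CS D g := exists n, chain CS D n g.

Lemma lind_mcs CS D : consis CS D -> mcs CS (lind CS D).
Proof.
  intros HD. split.
  - intros [l [Hl Hp]].
    assert (exists N, forall h, In h l -> chain CS D N h) as [N HN].
    { clear Hp. induction l as [|a l IH].
      - exists 0; simpl; tauto.
      - destruct IH as [N HN]; [intros; apply Hl; simpl; auto|].
        destruct (Hl a (or_introl eq_refl)) as [M HM].
        exists (max N M). intros h [<-|Hh].
        + eapply chain_mono; [|exact HM]; lia.
        + eapply chain_mono; [|apply HN; exact Hh]; lia. }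
    apply (chain_cons CS D N HD). exists l; auto.
  - intros f. pose proof (enum_code f) as E.
    assert (H : chain CS D (S (cfm f)) f \/ chain CS D (S (cfm f)) (FNeg f)).
    { simpl. rewrite E. destruct excluded_middle_informative; auto. }
    destruct H; [left|right]; eexists; eauto.
Qed.

Lemma lind_sub CS (D : fm -> Prop) g : D g -> lind CS D g.
Proof. intros; exists 0; auto. Qed.

Lemma cond_k CS G a x y : mcs CS G -> G (FCond a (FImp x y)) -> G (FCond a x) -> G (FCond a y).
Proof.
  intros HG H1 H2. apply (mcs_mp CS G (FCond a x)); auto.
  apply (mcs_mp CS G (FCond a (FImp x y))); auto. apply (mcs_prov CS); auto. apply PAx, A2.
Qed.

Lemma cond_chain CS G a l g : mcs CS G -> (forall x, In x l -> G (FCond a x)) ->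
  G (FCond a (imps l g)) -> G (FCond a g).
Proof.
  intros HG. revert g. induction l; simpl; intros g Hl H; auto.
  apply IHl; auto. eapply cond_k; eauto.
Qed.

Lemma exist_cond CS G a b : mcs CS G -> ~ G (FCond a b) ->
  exists D, mcs CS D /\ D a /\ ~ D b /\ forall x, G (FCond a x) -> D x.
Proof.
  intros HG Hn.
  set (D := fun g => (G (FCond a g) \/ g = a) \/ g = FNeg b).
  assert (HD : consis CS D).
  { intro Hb. apply deduction, deduction in Hb.
    apply (dv1 CS _ _ (FImp a b)) in Hb.
    2:{ intros v. rewrite !beval_imps_1, beval_bot. cbn [beval].
        destruct (beval v a), (beval v b); auto. }
    destruct Hb as [l [Hl Hp]]. apply Hn.
    apply (cond_chain CS G a [a] b HG); [intros x [<-|[]]; apply (mcs_prov CS); auto; apply PAx, A3|].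
    apply (cond_chain CS G a l); auto.
    apply (mcs_prov CS); auto. apply PRCN; auto. }
  exists (lind CS D). pose proof (lind_mcs CS D HD) as HM. split; [exact HM|split; [|split]].
  - apply lind_sub; unfold D; auto.
  - apply (mcs_neg CS); auto. apply lind_sub; unfold D; auto.
  - intros x Hx; apply lind_sub; unfold D; auto.
Qed.

Definition CM CS : model := {|
  W := sum (fm -> Prop) (fm -> Prop);
  WN := fun w => match w with inl G => mcs CS G | inr _ => False end;
  RF := fun f w v => match w, v with
        | inl G, inl D => mcs CS G /\ mcs CS D /\ D f /\ forall x, G (FCond f x) -> D x
        | _, _ => False end;
  RT := fun t w v => match w, v with
        | inl G, inl D => G = D
        | inl G, inr Sx => forall x, G (FJust t x) -> Sx x
        | inr _, _ => False end;
  Vp := fun w p => match w with inl G => G (FAtom p) | inr _ => False end;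
  Vf := fun w f => match w with inl _ => False | inr Sx => Sx f end |}.

Lemma or_norm (A X : Prop) : A -> ((A /\ X) \/ (~ A /\ False) <-> X).
Proof. tauto. Qed.

Lemma sat_inr CS Sx f : sat (CM CS) (inr Sx) f <-> Sx f.
Proof. destruct f; simpl; tauto. Qed.

Lemma truth CS f : forall G, mcs CS G -> (sat (CM CS) (inl G) f <-> G f).
Proof.
  induction f; intros G HG; simpl; rewrite (or_norm _ _ HG).
  - tauto.
  - rewrite IHf by auto. symmetry; apply (mcs_neg CS); auto.
  - rewrite IHf1, IHf2 by auto. symmetry; apply (mcs_and CS); auto.
  - rewrite IHf1, IHf2 by auto. symmetry; apply (mcs_imp CS); auto.
  - split.
    + intros H. apply NNPP; intro Hn.
      destruct (exist_cond CS G f1 f2 HG Hn) as [D [HD [Ha [Hb Hc]]]].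
      apply Hb. apply IHf2; [exact HD|]. apply (H (inl D)). simpl; auto.
    + intros H [D|Sx]; simpl; [|tauto].
      intros [_ [HD [Ha Hc]]]. apply IHf2; auto.
  - split.
    + intros H. apply (sat_inr CS (fun x => G (FJust t x))). apply H. simpl; auto.
    + intros H [D|Sx]; simpl.
      * intros <-. apply IHf; auto. apply (mcs_cond CS G (FJust t f)); auto.
        apply (mcs_prov CS); auto. apply PAx, A8.
      * intros Hs. apply sat_inr. auto.
Qed.

Lemma just_sat CS G t a : mcs CS G -> G (FJust t a) ->
  forall v, RT (CM CS) t (inl G) v -> sat (CM CS) v a.
Proof.
  intros HG H. apply (truth CS) in H; auto. simpl in H.
  destruct H as [[_ H]|[H _]]; [exact H|contradiction].
Qed.

Lemma CM_model CS G : mcs CS G -> LPC_model CS (CM CS).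
Proof.
  intros HG0. split; [exists (inl G); exact HG0|]. split.
  { intros f [w|w] [v|v]; simpl; tauto. }
  intros [G'|Sx] HG; simpl in HG; [|contradiction]. clear G HG0. rename G' into G.
  split; [|split; [|split; [|split; [|split; [|split; [|split]]]]]].
  - intros f [D|Sx]; simpl; [|tauto]. intros [_ [HD [Hf _]]]. apply truth; auto.
  - intros f Hs. apply truth in Hs; auto. simpl. split; [exact HG|split; [exact HG|split; [exact Hs|]]].
    intros x Hx. apply (mcs_cond CS G f); auto.
  - intros c f Hc. apply just_sat; auto. apply (mcs_prov CS); auto. apply PCS; auto.
  - intros s t [D|Sx]; simpl.
    + intros ->; auto.
    + intros H; split; intros x Hx; apply H.
      * apply (mcs_cond CS G (FJust s x)); auto. apply (mcs_prov CS); auto. apply PAx, A6.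
      * apply (mcs_cond CS G (FJust t x)); auto. apply (mcs_prov CS); auto. apply PAx, A7.
  - intros s t v Hv a b Hs. apply truth in Hs; auto.
    apply (just_sat CS G (TApp s t)); auto.
    apply (mcs_cond CS G (FAnd (FJust s (FCond a b)) (FJust t a)) _ HG); [apply (mcs_prov CS); auto; apply PAx, A5|exact Hs].
  - intros t. simpl. reflexivity.
  - intros t [D|Sx] u; simpl; [intros -> ; auto|contradiction].
  - intros v a b t Hs Hv. apply truth in Hs; auto.
    apply (just_sat CS G (TPair t a)); auto.
    apply (mcs_mp CS G (FJust t b) _ HG); [|exact Hs]. apply (mcs_prov CS); auto. apply PAx, A10.
Qed.

Lemma beval_bigconj v g l : beval v (bigconj g l) = forallb (beval v) (g :: l).
Proof.
  revert g; induction l; intros g; simpl.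
  - destruct (beval v g); auto.
  - rewrite IHl. reflexivity.
Qed.

Theorem mainTheorem11 (CS : const -> fm -> Prop) (HCS : constant_spec CS)
  (T : fm -> Prop) (f : fm) :
  entails CS T f -> deriv CS T f.
Proof.
  intros Hent. apply NNPP; intro Hnd.
  set (D := fun g => T g \/ g = FNeg f).
  assert (HD : consis CS D).
  { intro Hb. apply deduction in Hb.
    apply (dv1 CS _ _ f) in Hb.
    2:{ intros v. rewrite !beval_imps_1, beval_bot. cbn [beval].
        destruct (beval v f); auto. }
    destruct Hb as [[|g l] [Hl Hp]]; apply Hnd; simpl in Hp.
    - left; auto.
    - right. exists g, l. split; [apply Hl; simpl; auto|]. split; [intros; apply Hl; simpl; auto|].
      apply (taut_mp CS [FImp g (imps l f)]); [|intros p [<-|[]]; auto].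
      intros v Hv. specialize (Hv _ (or_introl eq_refl)).
      rewrite beval_imps_1, beval_bigconj in *. rewrite beval_imps in Hv.
      simpl. destruct (beval v g), (forallb (beval v) l), (beval v f); auto. }
  pose proof (lind_mcs CS D HD) as HM.
  assert (Hf : sat (CM CS) (inl (lind CS D)) f).
  { apply (Hent (CM CS) (CM_model CS _ HM) (inl (lind CS D)) HM).
    intros g Hg. apply truth; auto. apply lind_sub. unfold D; auto. }
  apply truth in Hf; auto.
  apply (proj1 (mcs_neg CS _ f HM)); auto. apply lind_sub. unfold D; auto.
Qed.
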